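(* Fix an integer base $b\ge 2$ and $f_*:\{0,\dots,b-1\}\to\mathbb{Z}^{\ge 0}$ with $f_*(0)=0$, $f_*(1)=1$, $\gcd(b,f_*(b-1))=1$, and suppose there is a digit $0\le m_*\le b-1$ with $\gcd(f(m_* )-m_*,f(b-1))=1$, where $f$ is the digit map $f\left(\sum_i a_ib^i\right)=\sum_i f_*(a_i)$ (base-$b$ representation). Let $u$ be a positive integer with $f^r(u)=u$ for some $r\ge 1$. Then for each $x\in\mathbb{Z}^+$ there is a $u$-integer $l$ such that $l$ and $l+x$ are concurrently $u$-integers.
   Context: $f^r$ is the $r$-fold iterate of $f$. A positive integer $n$ is a $u$-integer if $f^r(n)=u$ for some $r\ge1$. Two positive integers $m,n$ are concurrently $u$-integers if there is some $r\ge 1$ with $f^r(m)=f^r(n)=u$. *)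

(* Defs.v *)
From mathcomp Require Import all_boot all_order all_algebra.
Set Implicit Arguments. Unset Strict Implicit. Unset Printing Implicit Defensive.

(* Base-b digits of n, least significant first (fuel-bounded; fuel n
   suffices for b >= 2). digits b 0 = [::]. *)
Fixpoint digits_aux (fuel b n : nat) : seq nat :=
  match fuel with
  | 0 => [::]
  | k.+1 => if n == 0 then [::] else (n %% b) :: digits_aux k b (n %/ b)
  end.
Definition digits (b n : nat) : seq nat := digits_aux n b n.

Definition digit_map (b : nat) (fstar : nat -> nat) (n : nat) : nat :=
  \sum_(a <- digits b n) fstar a.

Definition u_integer (f : nat -> nat) (u n : nat) : Prop :=
  exists r, 0 < r /\ iter r f n = u.

Definition concurrently_u_integers (f : nat -> nat) (u m n : nat) : Prop :=
  exists r, 0 < r /\ iter r f m = u /\ iter r f n = u.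

(* Main.v *)
Require Import Defs.
From mathcomp Require Import all_boot all_order all_algebra all_solvable.
From mathcomp Require Import zify ring.
Import GRing.Theory Num.Theory.
Set Implicit Arguments. Unset Strict Implicit. Unset Printing Implicit Defensive.

Section Digits.
Variables (b : nat) (fstar : nat -> nat).
Hypothesis hb : 2 <= b.
Hypothesis f0 : fstar 0 = 0.
Local Notation f := (digit_map b fstar).

Lemma digits_aux_eq k1 k2 n : n <= k1 -> n <= k2 ->
  digits_aux k1 b n = digits_aux k2 b n.
Proof.
elim: k1 k2 n => [|k1 IH] [|k2] n /= h1 h2.
- by [].
- by have -> : n = 0 by lia.
- by have -> : n = 0 by lia.
case: eqP => // /eqP nz; congr (_ :: _); apply: IH.
- have : n %/ b < n by apply: ltn_Pdiv => //; lia.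
  lia.
- have : n %/ b < n by apply: ltn_Pdiv => //; lia.
  lia.
Qed.

Lemma f_zero : f 0 = 0.
Proof. by rewrite /digit_map /digits /= big_nil. Qed.

Lemma fE n : f n = fstar (n %% b) + f (n %/ b).
Proof.
case: n => [|n]; first by rewrite mod0n div0n f_zero f0.
rewrite /digit_map /digits /=.
rewrite (@digits_aux_eq n (n.+1 %/ b) (n.+1 %/ b)) ?big_cons //.
have : n.+1 %/ b < n.+1 by apply: ltn_Pdiv => //; lia.
lia.
Qed.

Lemma fD k a c : a < b ^ k -> f (a + b ^ k * c) = f a + f c.
Proof.
elim: k a => [|k IH] a ha.
  have -> : a = 0 by rewrite expn0 in ha; lia.
  by rewrite add0n expn0 mul1n f_zero.
rewrite fE (fE a).
have hb0 : 0 < b by lia.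
have e1 : a + b ^ k.+1 * c = (b ^ k * c) * b + a by rewrite expnS; lia.
rewrite e1 modnMDl divnMDl // -addnA; congr (_ + _).
rewrite addnC IH //.
by rewrite ltn_divLR // -expnSr.
Qed.

Lemma fdigit d : d < b -> f d = fstar d.
Proof.
move=> hd; rewrite fE modn_small // divn_small // f_zero; lia.
Qed.

Lemma fpow k : f (b ^ k) = fstar 1.
Proof.
have h1 : 1 < b by lia.
have := @fD k 0 1; rewrite add0n muln1 f_zero (fdigit h1).
apply; rewrite expn_gt0; lia.
Qed.

Lemma fnines k : f (b ^ k - 1) = k * fstar b.-1.
Proof.
elim: k => [|k IH]; first by rewrite expn0 subnn f_zero.
have e : b ^ k.+1 - 1 = b.-1 + b ^ 1 * (b ^ k - 1).
  have : 0 < b ^ k by rewrite expn_gt0; lia.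
  rewrite expnS expn1; move: (b ^ k) => P hP.
  have -> : b * P = b * (P - 1) + b by rewrite mulnBr muln1 subnK // leq_pmulr.
  lia.
have h1 : b.-1 < b by lia.
rewrite e fD ?expn1 // (fdigit h1) IH; lia.
Qed.

Fixpoint R (s d n : nat) : nat := if n is n'.+1 then d + b ^ s * R s d n' else 0.

Lemma R_lt s d n : 0 < s -> d < b -> R s d n < b ^ (s * n).
Proof.
move=> hs hd; elim: n => [|n IH] /=; first by rewrite muln0 expn0.
have hbs : b <= b ^ s.
  by rewrite -{1}(expn1 b) leq_pexp2l //; lia.
rewrite mulnS expnD.
have : (R s d n).+1 <= b ^ (s * n) by [].
move: (b ^ s) (b ^ (s * n)) hbs => P Q hbs hR.
nia.
Qed.

Lemma fR s d n : 0 < s -> d < b -> f (R s d n) = n * fstar d.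
Proof.
move=> hs hd; elim: n => [|n IH] /=; first by rewrite f_zero.
have hbs : d < b ^ s.
  apply: (leq_trans hd); rewrite -{1}(expn1 b) leq_pexp2l //; lia.
rewrite (@fD s d (R s d n) hbs) IH (fdigit hd); lia.
Qed.

Lemma R_pos s n : 0 < n -> 0 < R s 1 n.
Proof. by case: n. Qed.

End Digits.

Lemma onemod F a N : exists z, (1 + F * a) ^ N = 1 + F * z.
Proof.
elim: N => [|N [z IH]]; first by exists 0; rewrite expn0; lia.
exists (a + z + F * a * z); rewrite expnS IH; nia.
Qed.

Lemma R_mod b F w s d n : b ^ s = 1 + F * w -> exists z, R b s d n = d * n + F * z.
Proof.
move=> hw; elim: n => [|n [z IH]] /=; first by exists 0; lia.
exists (z + w * d * n + F * w * z); rewrite hw IH; nia.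
Qed.
Unset Implicit Arguments.

Theorem corollary2p2 (b : nat) (fstar : nat -> nat) (mstar u : nat) :
  2 <= b ->
  fstar 0 = 0 -> fstar 1 = 1 ->
  coprime b (fstar b.-1) ->
  mstar <= b.-1 ->
  intdiv.gcdz ((digit_map b fstar mstar)%:Z - mstar%:Z)%R
              (digit_map b fstar b.-1)%:Z = 1%R ->
  0 < u ->
  (exists r, 0 < r /\ iter r (digit_map b fstar) u = u) ->
  forall x : nat, 0 < x ->
    exists l : nat, 0 < l /\ u_integer (digit_map b fstar) u l /\
      concurrently_u_integers (digit_map b fstar) u l (l + x).
Proof.
move=> hb f0 f1 hcop hm hgcd hu _ x hx.
have hdig : forall d, d < b -> digit_map b fstar d = fstar d := fdigit hb f0.
have hmb : mstar < b by lia.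
have hb1 : b.-1 < b by lia.
have h1b : 1 < b by lia.
rewrite (hdig _ hmb) (hdig _ hb1) in hgcd.
set F := fstar b.-1 in hcop hgcd.
set g := fstar mstar in hgcd.
set f := digit_map b fstar.
have Fpos : 0 < F.
  rewrite lt0n; apply/negP => /eqP F0; move: hcop; rewrite F0 /coprime gcdn0.
  move/eqP; lia.
set lam := totient F.
have lampos : 0 < lam by rewrite totient_gt0.
have [w hw] : exists w, b ^ lam = 1 + F * w.
  have : F %| b ^ lam - 1.
    rewrite -eqn_mod_dvd; last by rewrite expn_gt0; lia.
    by apply/eqP; apply: Euler_exp_totient.
  case/dvdnP => w hw; exists w.
  have : 0 < b ^ lam by rewrite expn_gt0; lia.
  lia.
have [u0 [v0 huv]] := intdiv.Bezoutz (g%:Z - mstar%:Z)%R F%:Z.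
rewrite hgcd in huv.
set A := f (b ^ x - x).
set Q := (intdiv.modz ((1 - A%:Z) * u0) F%:Z)%R.
have Qge0 : (0 <= Q)%R by apply: intdiv.modz_ge0; rewrite eqz_nat; lia.
set q := absz Q.
set Dq := (intdiv.divz ((1 - A%:Z) * u0) F%:Z)%R.
have eqq : (q%:Z = (1 - A%:Z) * u0 - Dq * F%:Z)%R.
  by rewrite /q gez0_abs.
set N := q * g + A + 2.
set J := lam * N.
have hJ : N < b ^ J.
  apply: (leq_ltn_trans _ (ltn_expl _ h1b)); rewrite /J; nia.
have [w2 hw2] : exists w2, b ^ J = 1 + F * w2.
  by rewrite /J expnM hw; apply: onemod.
set E := b ^ J - 1.
have hE : E = F * w2 by rewrite /E hw2; lia.
set p := E - q * g.
have hp : p + q * g = E by rewrite /p; lia.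
have hpA : A <= p by rewrite /p; lia.
set y := R b lam 1 p + b ^ (lam * p) * R b lam mstar q.
have fy : f y = E.
  rewrite /f /y fD //; last exact: (R_lt hb f0).
  rewrite !fR //; lia.
have [z1 hz1] := R_mod 1 p hw.
have [z2 hz2] := R_mod mstar q hw.
have [z3 hz3] : exists z3, b ^ (lam * p) = 1 + F * z3.
  by rewrite expnM hw; apply: onemod.
have ey : y = p + F * z1 + (1 + F * z3) * (mstar * q + F * z2).
  by rewrite /y hz1 hz2 hz3; lia.
set K := ((w2 + z1 + z3 * mstar * q + z2 + F * z3 * z2)%:Z + (1 - A%:Z) * v0
          + Dq * (g%:Z - mstar%:Z))%R.
have key : ((y + 1)%:Z - A%:Z = F%:Z * K)%R.
  have key0 : ((y + 1)%:Z - A%:Z = F%:Z * K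
       + (1 - A%:Z) * (1 - (u0 * (g%:Z - mstar%:Z) + v0 * F%:Z)))%R.
    have ep : (p%:Z = F%:Z * w2%:Z - q%:Z * g%:Z)%R.
      have := congr1 Posz hp; rewrite hE PoszD !PoszM => <-; ring.
    rewrite ey !PoszD !PoszM ep eqq /K !PoszD !PoszM.
    ring.
  by rewrite key0 huv subrr mulr0 addr0.
have [k hk] : exists k, y + 1 = k * F + A.
  have Kge0 : (0 <= K)%R.
    rewrite -(pmulr_rge0 _ (_ : 0 < F%:Z)%R) ?ltz_nat // -key subr_ge0 lez_nat.
    have : p <= y by rewrite ey; lia.
    lia.
  have hK : ((absz K)%:Z = K)%R by rewrite abszE ger0_norm.
  exists (absz K).
  move: key; rewrite -hK; move: (absz K) (y) => k' y'.
  lia.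
have fD' := fD hb f0.
have fR' := fR hb f0.
have fpow' : forall j, f (b ^ j) = 1 by move=> j; rewrite /f (fpow hb f0) f1.
have hbpos : forall j, 0 < b ^ j by move=> j; rewrite expn_gt0; lia.
set s := R b 1 1 u.
have fs : f s = u by rewrite /f fR' // f1 muln1.
have spos : 0 < s by apply: R_pos.
set Z' := R b 1 1 s.-1.
have fZ' : f Z' = s.-1 by rewrite /f fR' // f1 muln1.
set v := 1 + b ^ J.+1 * Z'.
have vpos : 0 < v by rewrite /v; lia.
have fv : f v = s.
  rewrite /f /v fD'; last by rewrite -{1}(expn0 b) ltn_exp2l; lia.
  rewrite (hdig 1 h1b) -/f fZ' f1; lia.
have fEv : f (E + v) = s.
  have -> : E + v = b ^ J + b ^ J.+1 * Z' by rewrite /v /E; have := hbpos J; lia.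
  rewrite /f fD' ?ltn_exp2l // -/f fpow' fZ'; lia.
set Z := R b 1 1 v.
have fZ : f Z = v by rewrite /f fR' // f1 muln1.
have Zpos : 0 < Z by apply: R_pos.
set T := y.
set wv := b ^ T * Z.
have wvpos : 0 < wv by rewrite /wv muln_gt0 hbpos.
have fwv : f wv = v.
  by rewrite /wv -(add0n (b ^ T * Z)) /f (fD' T 0 Z (hbpos T)) f_zero -/f fZ.
have fywv : f (y + wv) = E + v.
  by rewrite /wv /f (fD' T y Z (ltn_expl _ h1b)) -/f fy fZ.
set H := R b 1 1 wv.-1.
have fH : f H = wv.-1 by rewrite /f fR' // f1 muln1.
have xlt : x < b ^ x by apply: ltn_expl.
set L := (b ^ x - x) + b ^ x * (b ^ k - 1).
have Lx : L + x = b ^ (x + k).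
  rewrite /L expnD; have := hbpos k; move: (b ^ k) (b ^ x) xlt => P B xlt hP.
  have -> : B * (P - 1) = B * P - B by rewrite mulnBr muln1.
  have : B <= B * P by rewrite leq_pmulr.
  lia.
have fL : f L = k * F + A.
  have hlt : b ^ x - x < b ^ x by lia.
  rewrite /L /f (fD' x _ _ hlt).
  by rewrite (fnines hb f0) -/f -/F -/A; lia.
have Lpos : 0 < L by rewrite /L addn_gt0 subn_gt0 xlt.
have hxk : b ^ (x + k) < b ^ (x + k).+1 by rewrite ltn_exp2l.
have Llt : L < b ^ (x + k).+1.
  by apply: ltn_trans hxk; rewrite -Lx -addn1 leq_add2l.
set l := L + b ^ (x + k).+1 * H.
have fl : f l = y + wv.
  rewrite /l /f (fD' _ _ _ Llt) -/f fL fH -hk.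
  move: wvpos; clear; move: (wv) => W hW; lia.
have flx : f (l + x) = wv.
  have -> : l + x = b ^ (x + k) + b ^ (x + k).+1 * H.
    by rewrite /l -Lx addnAC.
  rewrite /f (fD' _ _ _ hxk) -/f fpow' fH.
  move: wvpos; clear; move: (wv) => W hW; lia.
have lpos : 0 < l by rewrite /l addn_gt0 Lpos.
have it4 : forall n, iter 4 f n = f (f (f (f n))) by [].
exists l; split; first exact: lpos.
split.
  exists 4; split => //.
  by rewrite it4 fl fywv fEv fs.
exists 4; split => //; split.
  by rewrite it4 fl fywv fEv fs.
by rewrite it4 flx fwv fv fs.
Qed.
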